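(* Fix $\beta>0$ and $\delta\in(0,\pi)$. Let $\rho_\varepsilon(\varphi)$ and $d_\varepsilon(\varphi)$ be families of real $2\pi$-periodic functions, depending smoothly on $(\varepsilon,\varphi)$, such that for every $\varepsilon$ and every $\bar\varphi$ $$\int_{\bar\varphi-d_\varepsilon(\bar\varphi)}^{\bar\varphi+d_\varepsilon(\bar\varphi)}\rho_\varepsilon(\xi)e^{i\xi}\,d\xi=\frac{2}{\beta}\sin\big(\delta+d_\varepsilon(\bar\varphi)\big)e^{i\bar\varphi},$$ and such that $\rho_0\equiv1$ and $d_0$ is a constant. Let $\rho_1=\frac{d}{d\varepsilon}\big|_{\varepsilon=0}\rho_\varepsilon$ and $d_1=\frac{d}{d\varepsilon}\big|_{\varepsilon=0}d_\varepsilon$. Then: (a) $\beta\sin d_0=\sin(\delta+d_0)$; (b) the Fourier coefficients $\widehat{\rho}_{1n}$ of $\rho_1$ and $\widehat{d}_{1n}$ of $d_1$ all vanish except for those $n$ which satisfy the Gutkin relation $n\tan(d_0)=\tan(nd_0)$.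
   Context: The displayed equation is the analytic form of the $\delta$-Gutkin property of a magnetic billiard (Larmor radius $1/\beta$) whose boundary has radius of curvature $\rho$ as a function of the tangent angle; $\rho_0\equiv 1$, $d_0$ constant corresponds to the unit circle. *)

(* Defs.v *)
From Stdlib Require Import Reals Lra.
From Coquelicot Require Import Coquelicot.
Open Scope R_scope.

Fixpoint Ck_on (U : R -> R -> Prop) (k : nat) (f : R -> R -> R) : Prop :=
  (forall x y, U x y -> continuous (fun p : R * R => f (fst p) (snd p)) (x, y)) /\
  match k with
  | O => True
  | S k' => exists fx fy : R -> R -> R,
      (forall x y, U x y ->
         is_derive (fun t => f t y) x (fx x y) /\
         is_derive (fun t => f x t) y (fy x y)) /\
      Ck_on U k' fx /\ Ck_on U k' fy
  end.

Definition smooth_on (U : R -> R -> Prop) (f : R -> R -> R) : Prop :=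
  forall k, Ck_on U k f.

(* n-th complex Fourier coefficient of a 2pi-periodic real function,
   (1/2pi) int_0^{2pi} f(x) e^{-inx} dx, as an element of Coquelicot's C. *)
Definition fourier_coef (f : R -> R) (n : Z) : C :=
  ( / (2 * PI) * RInt (fun x => f x * cos (IZR n * x)) 0 (2 * PI),
    - / (2 * PI) * RInt (fun x => f x * sin (IZR n * x)) 0 (2 * PI) ).

(* Main.v *)
Require Import Defs.
From Stdlib Require Import Reals.
From Coquelicot Require Import Coquelicot.
Open Scope R_scope.
From Stdlib Require Import Lra FunctionalExtensionality.

Definition Cont (f : R -> R) := forall x, continuous f x.

Lemma Cont_mult f g : Cont f -> Cont g -> Cont (fun x => f x * g x).
Proof. intros Hf Hg x. apply (continuous_mult f g x); auto. Qed.
Lemma Cont_plus f g : Cont f -> Cont g -> Cont (fun x => f x + g x).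
Proof. intros Hf Hg x. apply (continuous_plus f g x); auto. Qed.
Lemma Cont_minus f g : Cont f -> Cont g -> Cont (fun x => f x - g x).
Proof. intros Hf Hg x. apply (continuous_minus f g x); auto. Qed.
Lemma Cont_const c : Cont (fun _ => c).
Proof. intros x. apply continuous_const. Qed.
Lemma Cont_id : Cont (fun x => x).
Proof. intros x. apply continuous_id. Qed.
Lemma Cont_comp f g : Cont f -> Cont g -> Cont (fun x => g (f x)).
Proof. intros Hf Hg x. apply continuous_comp; auto. Qed.
Lemma Cont_cos : Cont cos.
Proof. intros x. apply continuity_pt_filterlim. apply continuity_cos. Qed.
Lemma Cont_sin : Cont sin.
Proof. intros x. apply continuity_pt_filterlim. apply continuity_sin. Qed.
Lemma Cont_lin f a b : Cont f -> Cont (fun x => f (a * x + b)).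
Proof.
  intros Hf. apply (Cont_comp (fun x => a * x + b) f); auto.
  apply Cont_plus; [apply Cont_mult; [apply Cont_const|apply Cont_id]|apply Cont_const].
Qed.
Lemma Cont_ex_RInt f a b : Cont f -> ex_RInt f a b.
Proof. intros Hf. apply (@ex_RInt_continuous R_CompleteNormedModule). intros; apply Hf. Qed.
Ltac rring := match goal with |- ?a = ?b => change (@eq R a b) end; ring.
Lemma loc_strip (eps0 : R) (heps0 : 0 < eps0) (P : R -> Prop) :
  (forall y, - eps0 < y < eps0 -> P y) -> locally 0 P.
Proof.
  intros H. exists (mkposreal eps0 heps0). intros y Hy. apply H.
  change (Rabs (y - 0) < eps0) in Hy. apply Rabs_lt_between in Hy. lra.
Qed.

Lemma cont2_slice (f : R -> R -> R) y :
  (forall t, continuous (fun p : R * R => f (fst p) (snd p)) (y, t)) ->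
  Cont (fun t => f y t).
Proof.
  intros H t. apply (continuous_comp_2 (fun _ => y) (fun t => t) f t).
  apply continuous_const. apply continuous_id. apply H.
Qed.

Lemma cont2_to_2d (f : R -> R -> R) x y :
  continuous (fun p : R * R => f (fst p) (snd p)) (x, y) -> continuity_2d_pt f x y.
Proof. intros H. apply continuity_2d_pt_filterlim. exact H. Qed.

Section Param.
Variables (eps0 : R) (heps0 : 0 < eps0) (f fx : R -> R -> R) (h : R -> R).
Hypothesis (Hh : Cont h)
 (Hc : forall x y, -eps0<x<eps0 -> continuous (fun p : R*R => f (fst p) (snd p)) (x,y))
 (Hd : forall x y, -eps0<x<eps0 -> is_derive (fun t => f t y) x (fx x y))
 (Hfc : forall x y, -eps0<x<eps0 -> continuous (fun p : R*R => fx (fst p) (snd p)) (x,y)).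

Let g := fun e t => f e t * h t.

Lemma gDer u t : -eps0<u<eps0 -> Derive (fun z => g z t) u = fx u t * h t.
Proof.
  intros Hu. apply is_derive_unique. unfold g.
  apply (is_derive_scal_l (fun z => f z t) u (fx u t) (h t)). auto.
Qed.

Lemma gexR y a b : -eps0<y<eps0 -> ex_RInt (fun t => g y t) a b.
Proof.
  intros Hy. apply Cont_ex_RInt. apply Cont_mult; auto.
  apply cont2_slice. intros; apply Hc; auto.
Qed.

Lemma gcont2 x t : -eps0<x<eps0 ->
  continuity_2d_pt (fun u v => Derive (fun z => g z v) u) x t.
Proof.
  intros Hx.
  apply continuity_2d_pt_ext_loc with (f := fun u v => fx u v * h v).
  - assert (Hp : 0 < Rmin (eps0 - x) (x + eps0)) by (apply Rmin_case; lra).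
    exists (mkposreal _ Hp). intros u v Hu _. simpl in Hu.
    apply Rabs_lt_between in Hu.
    assert (Rmin (eps0 - x) (x + eps0) <= eps0 - x) by apply Rmin_l.
    assert (Rmin (eps0 - x) (x + eps0) <= x + eps0) by apply Rmin_r.
    symmetry. apply gDer. lra.
  - apply continuity_2d_pt_mult.
    + apply cont2_to_2d. auto.
    + apply continuity_2d_pt_filterlim.
      apply (continuous_comp (fun p : R * R => snd p) h).
      * apply continuous_snd.
      * apply Hh.
Qed.

Lemma param_deriv a b da db :
  is_derive a 0 da -> is_derive b 0 db ->
  is_derive (fun e => RInt (fun t => f e t * h t) (a e) (b e)) 0
    (RInt (fun t => fx 0 t * h t) (a 0) (b 0) + - (f 0 (a 0) * h (a 0)) * da
      + f 0 (b 0) * h (b 0) * db).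
Proof.
  intros Ha Hb.
  assert (H0 : -eps0 < 0 < eps0) by lra.
  assert (E : RInt (fun t => fx 0 t * h t) (a 0) (b 0)
            = RInt (fun t => Derive (fun u => g u t) 0) (a 0) (b 0)).
  { apply RInt_ext. intros t _. rewrite gDer; auto. }
  rewrite E.
  apply (is_derive_RInt_param_bound_comp g a b 0 da db).
  - apply (loc_strip eps0 heps0). intros; apply gexR; auto.
  - exists (mkposreal 1 Rlt_0_1). apply (loc_strip eps0 heps0). intros; apply gexR; auto.
  - exists (mkposreal 1 Rlt_0_1). apply (loc_strip eps0 heps0). intros; apply gexR; auto.
  - auto.
  - auto.
  - exists (mkposreal 1 Rlt_0_1). apply (loc_strip eps0 heps0). intros y Hy t _.
    eexists. unfold g. apply (is_derive_scal_l (fun z => f z t) y (fx y t) (h t)). auto.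
  - intros; apply gcont2; auto.
  - exists (mkposreal eps0 heps0). intros u v Hu _. simpl in Hu.
    apply Rabs_lt_between in Hu. apply gcont2. lra.
  - exists (mkposreal eps0 heps0). intros u v Hu _. simpl in Hu.
    apply Rabs_lt_between in Hu. apply gcont2. lra.
  - apply continuity_pt_filterlim. unfold g.
    apply (Cont_mult (fun t => f 0 t) h); auto. apply cont2_slice. intros; apply Hc; auto.
  - apply continuity_pt_filterlim. unfold g.
    apply (Cont_mult (fun t => f 0 t) h); auto. apply cont2_slice. intros; apply Hc; auto.
Qed.
End Param.
Lemma sin_2pik (k : Z) : sin (IZR k * (2 * PI)) = 0.
Proof.
  apply sin_eq_0_1. exists (2 * k)%Z. rewrite mult_IZR. ring.
Qed.
Lemma cos_2pik (k : Z) : cos (IZR k * (2 * PI)) = 1.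
Proof.
  replace (IZR k * (2 * PI)) with (2 * (IZR k * PI)) by ring.
  rewrite cos_2a_sin. rewrite sin_eq_0_1 by (exists k; ring). ring.
Qed.
Lemma sin_perZ (k : Z) x : sin (x + IZR k * (2 * PI)) = sin x.
Proof. rewrite sin_plus, sin_2pik, cos_2pik. ring. Qed.
Lemma cos_perZ (k : Z) x : cos (x + IZR k * (2 * PI)) = cos x.
Proof. rewrite cos_plus, sin_2pik, cos_2pik. ring. Qed.

Lemma RInt_shift (h : R -> R) c a b : Cont h ->
  RInt (fun y => h (y + c)) a b = RInt h (a + c) (b + c).
Proof.
  intros Hh.
  rewrite <- (Rmult_1_l a) at 2. rewrite <- (Rmult_1_l b) at 2.
  rewrite <- RInt_comp_lin by (apply Cont_ex_RInt; auto).
  apply RInt_ext. intros x _. unfold scal; simpl.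
  unfold mult; simpl. rewrite !Rmult_1_l; reflexivity.
Qed.

Lemma RInt_period (h : R -> R) a : Cont h -> (forall x, h (x + 2 * PI) = h x) ->
  RInt h a (a + 2 * PI) = RInt h 0 (2 * PI).
Proof.
  intros Hh Hp.
  assert (E1 := RInt_Chasles h a 0 (a + 2 * PI) (Cont_ex_RInt _ _ _ Hh) (Cont_ex_RInt _ _ _ Hh)).
  assert (E2 := RInt_Chasles h 0 (2 * PI) (a + 2 * PI) (Cont_ex_RInt _ _ _ Hh) (Cont_ex_RInt _ _ _ Hh)).
  assert (E3 := RInt_Chasles h 0 a 0 (Cont_ex_RInt _ _ _ Hh) (Cont_ex_RInt _ _ _ Hh)).
  rewrite RInt_point in E3.
  assert (E4 : RInt h (2 * PI) (a + 2 * PI) = RInt h 0 a).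
  { replace (2 * PI) with (0 + 2 * PI) at 1 by ring.
    rewrite <- RInt_shift by auto. apply RInt_ext. intros; apply Hp. }
  simpl in E1, E2, E3. unfold plus, zero in *; simpl in *.
  lra.
Qed.
Lemma Cont_shift f b : Cont f -> Cont (fun x => f (x + b)).
Proof. intros Hf. apply (Cont_comp (fun x => x + b) f); auto. apply Cont_plus; [apply Cont_id|apply Cont_const]. Qed.

Lemma RInt_minusR f g a b : Cont f -> Cont g ->
  RInt (fun x => f x - g x) a b = RInt f a b - RInt g a b.
Proof.
  intros Hf Hg. apply is_RInt_unique.
  apply (is_RInt_minus f g a b); apply (@RInt_correct R_CompleteNormedModule); apply Cont_ex_RInt; auto.
Qed.
Lemma RInt_scalR f k a b : Cont f ->
  RInt (fun x => k * f x) a b = k * RInt f a b.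
Proof.
  intros Hf. apply is_RInt_unique.
  apply (is_RInt_scal f a b k); apply (@RInt_correct R_CompleteNormedModule); apply Cont_ex_RInt; auto.
Qed.

Lemma deriv_Psym g (Hg : Cont g) d x :
  is_derive (fun x => RInt g (x - d) (x + d)) x (g (x + d) - g (x - d)).
Proof.
  assert (Ha : is_derive (fun x => x - d) x 1) by (auto_derive; auto; ring).
  assert (Hb : is_derive (fun x => x + d) x 1) by (auto_derive; auto; ring).
  assert (H := is_derive_RInt_bound_comp g (fun a b => RInt g a b) (fun x => x - d) (fun x => x + d) 1 1 x).
  simpl in H.
  replace (g (x + d) - g (x - d)) with (minus (scal 1 (g (x + d))) (scal 1 (g (x - d)))).
  - apply H; auto.
    apply filter_forall. intros u. apply (@RInt_correct R_CompleteNormedModule). apply Cont_ex_RInt; auto.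
  - unfold minus, plus, opp, scal; simpl. unfold mult; simpl. ring.
Qed.
Section Core.
Variables (r q : R -> R) (K d : R).
Hypothesis (Hr : Cont r) (Hq : Cont q)
  (Hrp : forall x, r (x + 2 * PI) = r x) (Hqp : forall x, q (x + 2 * PI) = q x)
  (HP : forall x, RInt (fun t => r t * cos t) (x - d) (x + d) = K * q x * cos x)
  (HQ : forall x, RInt (fun t => r t * sin t) (x - d) (x + d) = K * q x * sin x).

Lemma core (m : Z) (c : R) :
  IZR m * K * RInt (fun x => q x * cos ((IZR m - 1) * x + c)) 0 (2 * PI)
  = 2 * sin (IZR m * d) * RInt (fun x => r x * cos ((IZR m - 1) * x + c)) 0 (2 * PI).
Proof.
  set (M := IZR m).
  set (gc := fun t => r t * cos t). set (gs := fun t => r t * sin t).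
  assert (Hgc : Cont gc) by (apply Cont_mult; auto; apply Cont_cos).
  assert (Hgs : Cont gs) by (apply Cont_mult; auto; apply Cont_sin).
  set (P := fun x => RInt gc (x - d) (x + d)).
  set (Q := fun x => RInt gs (x - d) (x + d)).
  assert (DP : forall x, is_derive P x (gc (x + d) - gc (x - d))) by (intros; apply deriv_Psym; auto).
  assert (DQ : forall x, is_derive Q x (gs (x + d) - gs (x - d))) by (intros; apply deriv_Psym; auto).
  assert (CP : Cont P) by (intros x; apply (@ex_derive_continuous R_AbsRing R_NormedModule); eexists; apply DP).
  assert (CQ : Cont Q) by (intros x; apply (@ex_derive_continuous R_AbsRing R_NormedModule); eexists; apply DQ).
  set (Y := fun x => Q x * cos (M * x + c) - P x * sin (M * x + c)).
  set (T1 := fun x => (gs (x + d) - gs (x - d)) * cos (M * x + c)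
                      - (gc (x + d) - gc (x - d)) * sin (M * x + c)).
  set (T2 := fun x => P x * cos (M * x + c) + Q x * sin (M * x + c)).
  assert (CT1 : Cont T1).
  { unfold T1. apply Cont_minus; apply Cont_mult;
      try (apply Cont_minus; apply Cont_shift; auto);
      try (apply (Cont_lin cos); apply Cont_cos); try (apply (Cont_lin sin); apply Cont_sin). }
  assert (CT2 : Cont T2).
  { unfold T2. apply Cont_plus; apply Cont_mult; auto;
      try (apply (Cont_lin cos); apply Cont_cos); try (apply (Cont_lin sin); apply Cont_sin). }
  assert (DY : forall x, is_derive Y x (T1 x - M * T2 x)).
  { intros x. unfold Y.
    assert (E : T1 x - M * T2 x = (gs (x + d) - gs (x - d)) * cos (M * x + c)
       + Q x * (- sin (M * x + c) * M)
       - ((gc (x + d) - gc (x - d)) * sin (M * x + c) + P x * (cos (M * x + c) * M)))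
      by (unfold T1, T2; ring).
    rewrite E.
    assert (Dc : is_derive (fun x => cos (M * x + c)) x (- sin (M * x + c) * M))
      by (auto_derive; auto; ring).
    assert (Ds : is_derive (fun x => sin (M * x + c)) x (cos (M * x + c) * M))
      by (auto_derive; auto; ring).
    apply (is_derive_minus (fun x => Q x * cos (M * x + c)) (fun x => P x * sin (M * x + c))).
    - apply (is_derive_mult Q (fun x => cos (M * x + c))). apply DQ. exact Dc.
      intros; apply Rmult_comm.
    - apply (is_derive_mult P (fun x => sin (M * x + c))). apply DP. exact Ds.
      intros; apply Rmult_comm. }
  assert (IY : RInt (fun x => T1 x - M * T2 x) 0 (2 * PI) = Y (2 * PI) - Y 0).
  { apply is_RInt_unique.
    apply (@is_RInt_derive R_CompleteNormedModule Y (fun x => T1 x - M * T2 x)).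
    - intros; apply DY.
    - intros. apply Cont_minus; auto. apply Cont_mult; auto. apply Cont_const. }
  assert (Y0 : Y (2 * PI) - Y 0 = 0).
  { unfold Y, P, Q, gc, gs. rewrite !HP, !HQ.
    replace (q (2 * PI)) with (q 0) by (rewrite <- (Hqp 0); f_equal; ring).
    replace (M * (2 * PI) + c) with (c + IZR m * (2 * PI)) by (unfold M; ring).
    replace (M * 0 + c) with c by ring.
    rewrite sin_perZ, cos_perZ, sin_2PI, cos_2PI, sin_0, cos_0. ring. }
  rewrite RInt_minusR in IY by (auto; intros y; apply Cont_mult; auto; apply Cont_const).
  rewrite RInt_scalR in IY by auto.
  assert (I2 : RInt T2 0 (2 * PI) = K * RInt (fun x => q x * cos ((M - 1) * x + c)) 0 (2 * PI)).
  { rewrite <- RInt_scalR.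
    - apply RInt_ext. intros x _. unfold T2, P, Q, gc, gs. rewrite HP, HQ.
      replace ((M - 1) * x + c) with ((M * x + c) - x) by ring. rewrite cos_minus. match goal with |- ?a = ?b => change (@eq R a b) end; ring.
    - apply Cont_mult; auto. apply (Cont_lin cos); apply Cont_cos. }
  set (h1 := fun u => r u * sin (- (M - 1) * u + (M * d - c))).
  set (h2 := fun u => r u * sin (- (M - 1) * u + (- (M * d) - c))).
  assert (Ch1 : Cont h1) by (apply Cont_mult; auto; apply (Cont_lin sin); apply Cont_sin).
  assert (Ch2 : Cont h2) by (apply Cont_mult; auto; apply (Cont_lin sin); apply Cont_sin).
  assert (Mm : forall u, - (M - 1) * (u + 2 * PI) = - (M - 1) * u + IZR (1 - m) * (2 * PI))
    by (intros; rewrite minus_IZR; unfold M; ring).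
  assert (Ph1 : forall u, h1 (u + 2 * PI) = h1 u).
  { intros u. unfold h1. rewrite Hrp, Mm.
    replace (- (M - 1) * u + IZR (1 - m) * (2 * PI) + (M * d - c))
      with ((- (M - 1) * u + (M * d - c)) + IZR (1 - m) * (2 * PI)) by ring.
    rewrite sin_perZ. reflexivity. }
  assert (Ph2 : forall u, h2 (u + 2 * PI) = h2 u).
  { intros u. unfold h2. rewrite Hrp, Mm.
    replace (- (M - 1) * u + IZR (1 - m) * (2 * PI) + (- (M * d) - c))
      with ((- (M - 1) * u + (- (M * d) - c)) + IZR (1 - m) * (2 * PI)) by ring.
    rewrite sin_perZ. reflexivity. }
  assert (I1 : RInt T1 0 (2 * PI) = 2 * sin (M * d) * RInt (fun x => r x * cos ((M - 1) * x + c)) 0 (2 * PI)).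
  { transitivity (RInt (fun x => h1 (x + d) - h2 (x + - d)) 0 (2 * PI)).
    { apply RInt_ext. intros x _. unfold T1, h1, h2, gc, gs.
      replace (x + - d) with (x - d) by ring.
      replace (- (M - 1) * (x + d) + (M * d - c)) with ((x + d) - (M * x + c)) by ring.
      replace (- (M - 1) * (x - d) + (- (M * d) - c)) with ((x - d) - (M * x + c)) by ring.
      rewrite !sin_minus. rring. }
    rewrite RInt_minusR by (apply Cont_shift; auto).
    rewrite !RInt_shift by auto.
    replace (2 * PI + d) with ((0 + d) + 2 * PI) by ring.
    replace (2 * PI + - d) with ((0 + - d) + 2 * PI) by ring.
    rewrite !RInt_period by auto.
    rewrite <- RInt_minusR by auto.
    rewrite <- RInt_scalR by (apply Cont_mult; auto; apply (Cont_lin cos); apply Cont_cos).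
    apply RInt_ext. intros x _. unfold h1, h2.
    replace (- (M - 1) * x + (M * d - c)) with (M * d - ((M - 1) * x + c)) by ring.
    replace (- (M - 1) * x + (- (M * d) - c)) with (- (M * d) - ((M - 1) * x + c)) by ring.
    rewrite !sin_minus, sin_neg, cos_neg. rring. }
  rewrite I1, I2, Y0 in IY. fold M. lra.
Qed.
End Core.
Lemma der_cminus f c x l : is_derive f x l -> is_derive (fun e => c - f e) x (- l).
Proof.
  intros H. assert (H2 := is_derive_minus (fun _ => c) f x 0 l (is_derive_const c x) H).
  simpl in H2. unfold minus, plus, opp, zero in H2; simpl in H2.
  replace (- l) with (0 + - l) by ring. exact H2.
Qed.
Lemma der_cplus f c x l : is_derive f x l -> is_derive (fun e => c + f e) x l.
Proof.
  intros H. assert (H2 := is_derive_plus (fun _ => c) f x 0 l (is_derive_const c x) H).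
  simpl in H2. unfold plus, zero in H2; simpl in H2.
  replace l with (0 + l) by ring. exact H2.
Qed.
Lemma der_lin f a b x l : is_derive f x l -> is_derive (fun e => a * f e * b) x (a * l * b).
Proof.
  intros H. assert (H2 := is_derive_scal (fun e => f e * b) x a (l * b)).
  replace (a * l * b) with (a * (l * b)) by ring.
  eapply is_derive_ext; [| apply H2]. intros; simpl; ring.
  apply (is_derive_scal_l f x l b H).
Qed.
Lemma der_sin_comp f x l : is_derive f x l -> is_derive (fun e => sin (f e)) x (cos (f x) * l).
Proof.
  intros H. assert (H2 := is_derive_comp sin f x (cos (f x)) l (is_derive_sin (f x)) H).
  simpl in H2. unfold scal in H2; simpl in H2; unfold mult in H2; simpl in H2.
  rewrite Rmult_comm. exact H2.
Qed.

Lemma gutkin_X (N d : R) : N * tan d <> tan (N * d) ->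
  sin (N * d) * cos d - N * cos (N * d) * sin d <> 0.
Proof.
  intros H HX. apply H. unfold tan, Rdiv.
  assert (P1 := sin2_cos2 d). assert (P2 := sin2_cos2 (N * d)). unfold Rsqr in P1, P2.
  destruct (Req_dec (cos d) 0) as [c0|c0].
  - rewrite c0, Rinv_0, Rmult_0_r, Rmult_0_r.
    rewrite c0 in HX, P1.
    assert (E1 : N * cos (N * d) * sin d = 0) by lra.
    assert (N * cos (N * d) = 0).
    { assert (S1 : sin d * sin d = 1) by lra.
      transitivity (N * cos (N * d) * (sin d * sin d)); [rewrite S1; ring|].
      replace (N * cos (N * d) * (sin d * sin d)) with (N * cos (N * d) * sin d * sin d) by ring.
      rewrite E1; ring. }
    destruct (Rmult_integral _ _ H0) as [N0|C0].
    + subst N. rewrite Rmult_0_l, sin_0. ring.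
    + rewrite C0, Rinv_0. ring.
  - destruct (Req_dec (cos (N * d)) 0) as [c1|c1].
    + rewrite c1 in HX, P2. exfalso.
      assert (sin (N * d) = 0) by (apply (Rmult_eq_reg_r (cos d)); [lra|auto]).
      nra.
    + field_simplify_eq; auto. nra.
Qed.
Lemma core' r q K d (Hr : Cont r) (Hq : Cont q)
  (Hrp : forall x, r (x + 2 * PI) = r x) (Hqp : forall x, q (x + 2 * PI) = q x)
  (HP : forall x, RInt (fun t => r t * cos t) (x - d) (x + d) = K * q x * cos x)
  (HQ : forall x, RInt (fun t => r t * sin t) (x - d) (x + d) = K * q x * sin x)
  (m : Z) (c : R) (w : R -> R) (Hw : forall x, cos ((IZR m - 1) * x + c) = w x) :
  IZR m * K * RInt (fun x => q x * w x) 0 (2 * PI)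
  = 2 * sin (IZR m * d) * RInt (fun x => r x * w x) 0 (2 * PI).
Proof.
  assert (H := core r q K d Hr Hq Hrp Hqp HP HQ m c).
  replace (RInt (fun x => q x * w x) 0 (2 * PI)) with
    (RInt (fun x => q x * cos ((IZR m - 1) * x + c)) 0 (2 * PI))
    by (apply RInt_ext; intros; rewrite Hw; reflexivity).
  replace (RInt (fun x => r x * w x) 0 (2 * PI)) with
    (RInt (fun x => r x * cos ((IZR m - 1) * x + c)) 0 (2 * PI))
    by (apply RInt_ext; intros; rewrite Hw; reflexivity).
  exact H.
Qed.

Lemma cos_mpi2 y : cos (y + - (PI / 2)) = sin y.
Proof. rewrite cos_plus, cos_neg, sin_neg, cos_PI2, sin_PI2. ring. Qed.
Lemma cos_ppi2 y : cos (- y + PI / 2) = sin y.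
Proof. rewrite cos_plus, cos_neg, sin_neg, cos_PI2, sin_PI2. ring. Qed.

Theorem proposition3p4
  (beta delta : R) (hbeta : 0 < beta) (hdelta : 0 < delta < PI)
  (eps0 : R) (heps0 : 0 < eps0)
  (rho d : R -> R -> R)   (* rho eps phi = rho_eps(phi), d eps phi = d_eps(phi) *)
  (hrho_smooth : smooth_on (fun e _ => - eps0 < e < eps0) rho)
  (hd_smooth : smooth_on (fun e _ => - eps0 < e < eps0) d)
  (hrho_per : forall e phi, - eps0 < e < eps0 -> rho e (phi + 2 * PI) = rho e phi)
  (hd_per : forall e phi, - eps0 < e < eps0 -> d e (phi + 2 * PI) = d e phi)
  (* real and imaginary parts of the integral identity *)
  (hint_re : forall e phib, - eps0 < e < eps0 ->
     RInt (fun xi => rho e xi * cos xi) (phib - d e phib) (phib + d e phib)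
     = 2 / beta * sin (delta + d e phib) * cos phib)
  (hint_im : forall e phib, - eps0 < e < eps0 ->
     RInt (fun xi => rho e xi * sin xi) (phib - d e phib) (phib + d e phib)
     = 2 / beta * sin (delta + d e phib) * sin phib)
  (hrho0 : forall phi, rho 0 phi = 1)
  (d0 : R) (hd0 : forall phi, d 0 phi = d0) :
  beta * sin d0 = sin (delta + d0) /\
  (forall n : Z, IZR n * tan d0 <> tan (IZR n * d0) ->
     fourier_coef (fun phi => Derive (fun e => rho e phi) 0) n = 0%C /\
     fourier_coef (fun phi => Derive (fun e => d e phi) 0) n = 0%C).
Proof.
  assert (H0 : - eps0 < 0 < eps0) by lra.
  assert (PA : beta * sin d0 = sin (delta + d0)).
  { assert (E := hint_re 0 0 H0). rewrite !hd0 in E.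
    replace (RInt (fun xi => rho 0 xi * cos xi) (0 - d0) (0 + d0)) with
      (RInt cos (0 - d0) (0 + d0)) in E
      by (apply RInt_ext; intros; rewrite hrho0; rring).
    assert (I : is_RInt cos (0 - d0) (0 + d0) (minus (sin (0 + d0)) (sin (0 - d0)))).
    { apply (@is_RInt_derive R_CompleteNormedModule sin cos).
      - intros; apply is_derive_sin.
      - intros; apply Cont_cos. }
    apply (@is_RInt_unique R_CompleteNormedModule) in I. rewrite I in E.
    unfold minus, plus, opp in E; simpl in E.
    replace (0 + d0) with d0 in E by ring. replace (0 - d0) with (- d0) in E by ring.
    rewrite sin_neg, cos_0 in E.
    apply (Rmult_eq_reg_l (2 / beta)).
    - replace (2 / beta * sin (delta + d0)) with (2 / beta * sin (delta + d0) * 1) by ring.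
      rewrite <- E. field. lra.
    - apply Rgt_not_eq. apply Rdiv_lt_0_compat; lra. }
  split; [exact PA|].
  destruct (hrho_smooth 1%nat) as [Hcr [fxr [fyr [Hdr [[Hfcr _] _]]]]].
  destruct (hd_smooth 1%nat) as [Hcd [fxd [fyd [Hdd [[Hfcd _] _]]]]].
  assert (Dr : forall x y, -eps0<x<eps0 -> is_derive (fun t => rho t y) x (fxr x y))
    by (intros; apply Hdr; auto).
  assert (Dd : forall x y, -eps0<x<eps0 -> is_derive (fun t => d t y) x (fxd x y))
    by (intros; apply Hdd; auto).
  assert (Cr : Cont (fun phi => fxr 0 phi)) by (apply cont2_slice; intros; apply Hfcr; auto).
  assert (Cq : Cont (fun phi => fxd 0 phi)) by (apply cont2_slice; intros; apply Hfcd; auto).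
  assert (Per : forall (f fx : R -> R -> R),
    (forall e phi, - eps0 < e < eps0 -> f e (phi + 2 * PI) = f e phi) ->
    (forall x y, -eps0<x<eps0 -> is_derive (fun t => f t y) x (fx x y)) ->
    forall phi, fx 0 (phi + 2 * PI) = fx 0 phi).
  { intros f fx Hp Hx phi.
    assert (A := Hx 0 (phi + 2 * PI) H0).
    assert (B : is_derive (fun t => f t phi) 0 (fx 0 (phi + 2 * PI))).
    { eapply is_derive_ext_loc; [|exact A]. apply (loc_strip eps0 heps0). intros; apply Hp; auto. }
    apply is_derive_unique in B. rewrite <- B. apply is_derive_unique. apply Hx; auto. }
  assert (Prr := Per rho fxr hrho_per Dr).
  assert (Pqq := Per d fxd hd_per Dd).
  set (K := 2 / beta * cos (delta + d0) - 2 * cos d0).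
  assert (HP : forall x, RInt (fun t => fxr 0 t * cos t) (x - d0) (x + d0) = K * fxd 0 x * cos x).
  { intros phi.
    assert (L := param_deriv eps0 heps0 rho fxr cos Cont_cos Hcr Dr Hfcr
       (fun e => phi - d e phi) (fun e => phi + d e phi) (- fxd 0 phi) (fxd 0 phi)
       (der_cminus _ _ _ _ (Dd 0 phi H0)) (der_cplus _ _ _ _ (Dd 0 phi H0))).
    assert (L' := is_derive_ext_loc _ (fun e => 2 / beta * sin (delta + d e phi) * cos phi) _ _
                   (loc_strip eps0 heps0 _ (fun e He => hint_re e phi He)) L).
    assert (Rd := der_lin _ (2 / beta) (cos phi) _ _
                   (der_sin_comp _ _ _ (der_cplus _ delta _ _ (Dd 0 phi H0)))).
    apply is_derive_unique in L'. apply is_derive_unique in Rd. rewrite Rd in L'.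
    cbv beta in L'. rewrite !hd0, !hrho0 in L'.
    assert (CC : cos (phi - d0) + cos (phi + d0) = 2 * cos phi * cos d0)
      by (rewrite cos_minus, cos_plus; ring).
    unfold K. 
    replace ((2 / beta * cos (delta + d0) - 2 * cos d0) * fxd 0 phi * cos phi) with
      (2 / beta * (cos (delta + d0) * fxd 0 phi) * cos phi - fxd 0 phi * (cos (phi - d0) + cos (phi + d0)))
      by (rewrite CC; ring).
    rewrite L'. generalize (RInt (fun t => fxr 0 t * cos t) (phi - d0) (phi + d0)). intros I. change R in I. rring. }
  assert (HQ : forall x, RInt (fun t => fxr 0 t * sin t) (x - d0) (x + d0) = K * fxd 0 x * sin x).
  { intros phi.
    assert (L := param_deriv eps0 heps0 rho fxr sin Cont_sin Hcr Dr Hfcr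
       (fun e => phi - d e phi) (fun e => phi + d e phi) (- fxd 0 phi) (fxd 0 phi)
       (der_cminus _ _ _ _ (Dd 0 phi H0)) (der_cplus _ _ _ _ (Dd 0 phi H0))).
    assert (L' := is_derive_ext_loc _ (fun e => 2 / beta * sin (delta + d e phi) * sin phi) _ _
                   (loc_strip eps0 heps0 _ (fun e He => hint_im e phi He)) L).
    assert (Rd := der_lin _ (2 / beta) (sin phi) _ _
                   (der_sin_comp _ _ _ (der_cplus _ delta _ _ (Dd 0 phi H0)))).
    apply is_derive_unique in L'. apply is_derive_unique in Rd. rewrite Rd in L'.
    cbv beta in L'. rewrite !hd0, !hrho0 in L'.
    assert (CC : sin (phi - d0) + sin (phi + d0) = 2 * sin phi * cos d0)
      by (rewrite sin_minus, sin_plus; ring).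
    unfold K. 
    replace ((2 / beta * cos (delta + d0) - 2 * cos d0) * fxd 0 phi * sin phi) with
      (2 / beta * (cos (delta + d0) * fxd 0 phi) * sin phi - fxd 0 phi * (sin (phi - d0) + sin (phi + d0)))
      by (rewrite CC; ring).
    rewrite L'. generalize (RInt (fun t => fxr 0 t * sin t) (phi - d0) (phi + d0)). intros I. change R in I. rring. }
  assert (Kne : K <> 0).
  { intros K0. unfold K in K0.
    assert (Sd : sin delta > 0) by (apply sin_gt_0; lra).
    assert (E1 : cos (delta + d0) = beta * cos d0).
    { apply (Rmult_eq_reg_l (2 / beta)); [| apply Rgt_not_eq; apply Rdiv_lt_0_compat; lra].
      replace (2 / beta * (beta * cos d0)) with (2 * cos d0) by (field; lra). lra. }
    assert (E2 : sin delta = sin (delta + d0) * cos d0 - cos (delta + d0) * sin d0).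
    { replace delta with ((delta + d0) - d0) at 1 by ring. apply sin_minus. }
    rewrite E1, <- PA in E2. lra. }
  intros n Hn.
  assert (HX := gutkin_X (IZR n) d0 Hn).
  set (N := IZR n) in *.
  assert (c1 := core' _ _ K d0 Cr Cq Prr Pqq HP HQ (n + 1) 0 (fun x => cos (N * x))
                 ltac:(intros; rewrite plus_IZR; fold N; f_equal; ring)).
  assert (c2 := core' _ _ K d0 Cr Cq Prr Pqq HP HQ (1 - n) 0 (fun x => cos (N * x))
                 ltac:(intros; rewrite minus_IZR; fold N;
                       replace ((1 - N - 1) * x + 0) with (- (N * x)) by ring; apply cos_neg)).
  assert (c3 := core' _ _ K d0 Cr Cq Prr Pqq HP HQ (n + 1) (- (PI / 2)) (fun x => sin (N * x))
                 ltac:(intros; rewrite plus_IZR; fold N;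
                       replace ((N + 1 - 1) * x) with (N * x) by ring; apply cos_mpi2)).
  assert (c4 := core' _ _ K d0 Cr Cq Prr Pqq HP HQ (1 - n) (PI / 2) (fun x => sin (N * x))
                 ltac:(intros; rewrite minus_IZR; fold N;
                       replace ((1 - N - 1) * x) with (- (N * x)) by ring; apply cos_ppi2)).
  cbv beta in c1, c2, c3, c4.
  rewrite plus_IZR in c1, c3. rewrite minus_IZR in c2, c4. fold N in c1, c2, c3, c4.
  set (Ac := RInt (fun x => fxr 0 x * cos (N * x)) 0 (2 * PI)) in *.
  set (As := RInt (fun x => fxr 0 x * sin (N * x)) 0 (2 * PI)) in *.
  set (Bc := RInt (fun x => fxd 0 x * cos (N * x)) 0 (2 * PI)) in *.
  set (Bs := RInt (fun x => fxd 0 x * sin (N * x)) 0 (2 * PI)) in *.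
  assert (S1 : sin ((N + 1) * d0) = sin (N * d0) * cos d0 + cos (N * d0) * sin d0)
    by (rewrite <- sin_plus; f_equal; ring).
  assert (S2 : sin ((1 - N) * d0) = sin d0 * cos (N * d0) - cos d0 * sin (N * d0))
    by (rewrite <- sin_minus; f_equal; ring).
  set (X := sin (N * d0) * cos d0 - N * cos (N * d0) * sin d0) in *.
  assert (Gen : forall A B : R,
    (N + 1) * K * B = 2 * sin ((N + 1) * d0) * A ->
    (1 - N) * K * B = 2 * sin ((1 - N) * d0) * A -> A = 0 /\ B = 0).
  { intros A B e1 e2.
    assert (E : 2 * A * (2 * X) = (1 - N) * (2 * sin ((N + 1) * d0) * A) - (N + 1) * (2 * sin ((1 - N) * d0) * A))
      by (rewrite S1, S2; unfold X; ring).
    rewrite <- e1, <- e2 in E.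
    assert (A0 : A = 0).
    { assert (AX : A * X = 0) by (replace (A * X) with ((2 * A * (2 * X)) / 4) by field; rewrite E; field).
      destruct (Rmult_integral _ _ AX); [auto | contradiction]. }
    split; auto. rewrite A0 in e1, e2.
    assert (KB : K * B = 0) by nra.
    destruct (Rmult_integral _ _ KB); [contradiction | auto]. }
  destruct (Gen Ac Bc c1 c2) as [Ac0 Bc0].
  destruct (Gen As Bs c3 c4) as [As0 Bs0].
  assert (Efr : (fun phi => Derive (fun e => rho e phi) 0) = (fun phi => fxr 0 phi))
    by (apply functional_extensionality; intros; apply is_derive_unique; apply Dr; auto).
  assert (Efd : (fun phi => Derive (fun e => d e phi) 0) = (fun phi => fxd 0 phi))
    by (apply functional_extensionality; intros; apply is_derive_unique; apply Dd; auto).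
  rewrite Efr, Efd. unfold fourier_coef. cbv beta. fold N.
  fold Ac As Bc Bs. rewrite Ac0, As0, Bc0, Bs0.
  split; unfold RtoC; f_equal; ring.
Qed.
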